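(* Let $n\ge2$ and $\sigma>0$. Write eigenvectors of $\mathbf A_\sigma^{-1}\mathbf B$ as $\mathbf p=(p_1,\dots,p_n)$, normalized with $\|\mathbf p\|=1$. Then the following hold. (i) The matrix $\mathbf A_\sigma^{-1}\mathbf B$ has $n-1$ linearly independent eigenvectors associated with positive eigenvalues. (ii) Exactly $\lfloor n/2\rfloor$ of these eigenvectors satisfy $p_l=p_{n-l}$ for $l=1,\dots,n-1$ and $p_n\neq0$. (iii) The remaining $\lfloor (n-1)/2\rfloor$ of these eigenvectors have entries $p_l=b\sin(l\theta_j)$ for $l=1,\dots,n$. Here $\theta_j=2\pi m_j/n$ for some $m_j\in\mathbb Z$, and $b\in\mathbb R\setminus\{0\}$ is a normalizing constant. In particular these eigenvectors satisfy $p_l=-p_{n-l}$ for $l=1,\dots,n-1$ and $p_n=0$, and they do not depend on $\sigma$. (iv) The eigenvector $\mathbf p_n$ associated with the unique negative eigenvalue satisfies $p_{l}=p_{n-l}$ for $l=1,\dots,n-1$ and $p_n\neq 0$.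
   Context: Let $\mathbf L\in\mathbb R^{n\times n}$ be the periodic discrete one-dimensional Laplacian, i.e. $(\mathbf L\mathbf x)_i=x_{i-1}-2x_i+x_{i+1}$ with indices taken modulo $n$. For $\sigma\ge 0$ set $\mathbf A_\sigma=\mathbf I-\sigma\mathbf L$, which is symmetric positive definite. Let $\mathbf B=\mathrm{diag}(1,\dots,1,-1)\in\mathbb R^{n\times n}$. It is known that $\mathbf A_\sigma^{-1}\mathbf B$ is diagonalizable with real eigenvalues, exactly one of which is negative and $n-1$ of which are positive. *)

(* Defs.v *)
From Stdlib Require Import Reals Lra Lia Arith.
Open Scope R_scope.

(* Vectors in R^n are represented as functions p : nat -> R, of which only
   the entries p 1, ..., p n (1-based, as in the paper) are relevant. *)

Definition prevn (n i : nat) : nat := if Nat.eqb i 1 then n else (i - 1)%nat.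
Definition nextn (n i : nat) : nat := if Nat.eqb i n then 1%nat else (i + 1)%nat.

Definition Lap (n : nat) (x : nat -> R) (i : nat) : R :=
  x (prevn n i) - 2 * x i + x (nextn n i).

Definition Aop (n : nat) (sigma : R) (x : nat -> R) (i : nat) : R :=
  x i - sigma * Lap n x i.

Definition Bop (n : nat) (x : nat -> R) (i : nat) : R :=
  if Nat.eqb i n then - x i else x i.

Fixpoint vsum (k : nat) (f : nat -> R) : R :=
  match k with
  | O => 0
  | S k' => vsum k' f + f (S k')
  end.

Fixpoint cnt (m : nat) (s : nat -> bool) : nat :=
  match m with
  | O => O
  | S m' => (cnt m' s + (if s (S m') then 1 else 0))%nat
  end.

(* p is an eigenvector of A_sigma^{-1} B with eigenvalue lam:
   A_sigma^{-1} (B p) = lam p, i.e. (A_sigma being invertible) lam p is the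
   solution x of A_sigma x = B p, and p <> 0. *)
Definition is_eigvec_AinvB (n : nat) (sigma lam : R) (p : nat -> R) : Prop :=
  (exists i, (1 <= i <= n)%nat /\ p i <> 0) /\
  forall i, (1 <= i <= n)%nat ->
    Aop n sigma (fun l => lam * p l) i = Bop n p i.

Definition unit_norm (n : nat) (p : nat -> R) : Prop :=
  vsum n (fun l => p l ^ 2) = 1.

Definition lin_indep (n : nat) (P : nat -> nat -> R) : Prop :=
  forall c : nat -> R,
    (forall i, (1 <= i <= n)%nat -> vsum n (fun k => c k * P k i) = 0) ->
    forall k, (1 <= k <= n)%nat -> c k = 0.

Definition sym_vec (n : nat) (p : nat -> R) : Prop :=
  forall l, (1 <= l <= n - 1)%nat -> p l = p (n - l)%nat.

Definition antisym_vec (n : nat) (p : nat -> R) : Prop :=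
  forall l, (1 <= l <= n - 1)%nat -> p l = - p (n - l)%nat.

(* Main.v *)
Require Import Defs.
From Stdlib Require Import Reals ZArith Lra Lia Arith.
Open Scope R_scope.

Fixpoint ssum (N : nat) (F : nat -> R) : R :=
  match N with O => 0 | S N' => ssum N' F + F N' end.
Fixpoint sprod (N : nat) (F : nat -> R) : R :=
  match N with O => 1 | S N' => sprod N' F * F N' end.

Lemma ssum_ext N F G : (forall m, (m < N)%nat -> F m = G m) -> ssum N F = ssum N G.
Proof. induction N; simpl; intros H; [reflexivity|]. rewrite IHN by (intros; apply H; lia). rewrite H by lia. reflexivity. Qed.
Lemma ssum_lin N F G a b : ssum N (fun m => a * F m + b * G m) = a * ssum N F + b * ssum N G.
Proof. induction N; simpl; [ring|]. rewrite IHN; ring. Qed.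
Lemma ssum_scal N F a : ssum N (fun m => a * F m) = a * ssum N F.
Proof. induction N; simpl; [ring|]. rewrite IHN; ring. Qed.
Lemma ssum_plus N F G : ssum N (fun m => F m + G m) = ssum N F + ssum N G.
Proof. induction N; simpl; [ring|]. rewrite IHN; ring. Qed.
Lemma ssum_const N c : ssum N (fun _ => c) = INR N * c.
Proof. induction N; simpl ssum; [simpl; ring|]. rewrite IHN, S_INR; ring. Qed.
Lemma ssum_ge N F c : (forall m, (m < N)%nat -> c <= F m) -> INR N * c <= ssum N F.
Proof. induction N; simpl ssum; intros H; [simpl; lra|]. rewrite S_INR.
  assert (H1 := H N (Nat.lt_succ_diag_r N)). assert (INR N * c <= ssum N F) by (apply IHN; intros; apply H; lia). lra. Qed.
Lemma ssum_pos N F k : (forall m, (m < N)%nat -> 0 <= F m) -> (k < N)%nat -> 0 < F k -> 0 < ssum N F.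
Proof. induction N; simpl; intros H Hk Hp; [lia|].
  assert (0 <= ssum N F) by (replace 0 with (INR N * 0) by ring; apply ssum_ge; intros; apply H; lia).
  destruct (Nat.eq_dec k N) as [->|]. - lra.
  - assert (0 < ssum N F) by (apply IHN; [intros; apply H; lia|lia|auto]). assert (0 <= F N) by (apply H; lia). lra. Qed.

Lemma sprod_skip D j0 x : (j0 < D)%nat -> sprod D (fun j => if Nat.eqb j j0 then 1 else x j) * x j0 = sprod D x.
Proof. induction D; intros H; [lia|]. simpl. destruct (Nat.eq_dec j0 D) as [->|Hne].
  - rewrite Nat.eqb_refl.
    assert (E: sprod D (fun j => if Nat.eqb j D then 1 else x j) = sprod D x).
    { clear IHD H. assert (forall D', (D' <= D)%nat -> sprod D' (fun j => if Nat.eqb j D then 1 else x j) = sprod D' x).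
      { induction D'; intros; simpl; [reflexivity|]. rewrite IHD' by lia. replace (Nat.eqb D' D) with false by (symmetry; apply Nat.eqb_neq; lia). reflexivity. }
      apply H; lia. }
    rewrite E; ring.
  - replace (Nat.eqb D j0) with false by (symmetry; apply Nat.eqb_neq; lia).
    rewrite <- IHD by lia. ring. Qed.
Lemma sprod_zero D j0 x : (j0 < D)%nat -> x j0 = 0 -> sprod D x = 0.
Proof. induction D; intros H Hx; [lia|]. simpl. destruct (Nat.eq_dec j0 D) as [->|]. - rewrite Hx; ring. - rewrite IHD by (auto; lia); ring. Qed.
Lemma sprod_nz D x : (forall j, (j < D)%nat -> x j <> 0) -> sprod D x <> 0.
Proof. induction D; simpl; intros H; [lra|]. apply Rmult_integral_contrapositive_currified; [apply IHD; intros; apply H; lia| apply H; lia]. Qed.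
Lemma sprod_mult D x y : sprod D x * sprod D y = sprod D (fun j => x j * y j).
Proof. induction D; simpl; [ring|]. rewrite <- IHD; ring. Qed.
Lemma sprod_pos D x : (forall j, (j < D)%nat -> 0 < x j) -> 0 < sprod D x.
Proof. induction D; simpl; intros H; [lra|]. apply Rmult_lt_0_compat; [apply IHD; intros; apply H; lia| apply H; lia]. Qed.

Lemma sprod_sign D k x : (forall j, (j < D)%nat -> (j < k)%nat -> x j < 0) ->
  (forall j, (j < D)%nat -> (k < j)%nat -> 0 < x j) ->
  0 < (-1) ^ (Nat.min D k) * sprod D (fun j => if Nat.eqb j k then 1 else x j).
Proof. induction D; intros H1 H2; cbn [sprod]. { simpl; lra. }
  assert (IH : 0 < (-1) ^ (Nat.min D k) * sprod D (fun j => if Nat.eqb j k then 1 else x j)) by (apply IHD; [intros; apply H1; lia | intros; apply H2; lia]).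
  destruct (Nat.eq_dec D k) as [Hk|Hne].
  - subst k. rewrite Nat.eqb_refl. replace (Nat.min (S D) D) with (Nat.min D D) by lia. lra.
  - replace (Nat.eqb D k) with false by (symmetry; apply Nat.eqb_neq; auto).
    destruct (Nat.lt_ge_cases D k).
    + replace (Nat.min (S D) k) with (S (Nat.min D k)) by lia. simpl.
      assert (x D < 0) by (apply H1; lia).
      replace (-1 * (-1) ^ Nat.min D k * (sprod D (fun j => if Nat.eqb j k then 1 else x j) * x D))
        with (((-1) ^ Nat.min D k * sprod D (fun j => if Nat.eqb j k then 1 else x j)) * (- x D)) by ring.
      apply Rmult_lt_0_compat; lra.
    + replace (Nat.min (S D) k) with (Nat.min D k) by lia.
      assert (0 < x D) by (apply H2; lia).
      rewrite <- Rmult_assoc. apply Rmult_lt_0_compat; lra. Qed.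

Lemma cont_ssum N (F : nat -> R -> R) : (forall m, continuity (F m)) -> continuity (fun x => ssum N (fun m => F m x)).
Proof. intros H; induction N; simpl.
  - apply continuity_const. intros a b; reflexivity.
  - apply (continuity_plus (fun x => ssum N (fun m => F m x)) (F N)); auto. Qed.
Lemma cont_sprod N (F : nat -> R -> R) : (forall m, continuity (F m)) -> continuity (fun x => sprod N (fun m => F m x)).
Proof. intros H; induction N; simpl.
  - apply continuity_const. intros a b; reflexivity.
  - apply (continuity_mult (fun x => sprod N (fun m => F m x)) (F N)); auto. Qed.
Lemma cont_lin a b : continuity (fun x => x * a + b).
Proof. apply (continuity_plus (fun x => x * a) (fun _ => b)).
  - apply (continuity_mult id (fun _ => a)). apply derivable_continuous, derivable_id. apply continuity_const; intros ? ?; reflexivity.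
  - apply continuity_const; intros ? ?; reflexivity. Qed.

Lemma vsum_ext k f g : (forall i, (1 <= i <= k)%nat -> f i = g i) -> vsum k f = vsum k g.
Proof. induction k; simpl; intros H; [reflexivity|]. rewrite IHk by (intros; apply H; lia). rewrite H by lia; reflexivity. Qed.
Lemma vsum_lin k f g a b : vsum k (fun i => a * f i + b * g i) = a * vsum k f + b * vsum k g.
Proof. induction k; simpl; [ring|]. rewrite IHk; ring. Qed.
Lemma vsum_scal k f a : vsum k (fun i => a * f i) = a * vsum k f.
Proof. induction k; simpl; [ring|]. rewrite IHk; ring. Qed.
Lemma vsum_plus k f g : vsum k (fun i => f i + g i) = vsum k f + vsum k g.
Proof. induction k; simpl; [ring|]. rewrite IHk; ring. Qed.
Lemma vsum_zero k : vsum k (fun _ => 0) = 0.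
Proof. induction k; simpl; [ring|]. rewrite IHk; ring. Qed.
Lemma vsum_swap a b (F : nat -> nat -> R) :
  vsum a (fun i => vsum b (fun k => F i k)) = vsum b (fun k => vsum a (fun i => F i k)).
Proof. induction a; simpl. - rewrite vsum_zero; reflexivity.
  - rewrite IHa. rewrite <- vsum_plus. reflexivity. Qed.
Lemma vsum_single n F j : (1 <= j <= n)%nat -> (forall k, (1 <= k <= n)%nat -> k <> j -> F k = 0) -> vsum n F = F j.
Proof. induction n; intros Hj H; [lia|]. simpl. destruct (Nat.eq_dec j (S n)) as [->|Hne].
  - replace (vsum n F) with (vsum n (fun _ => 0)). rewrite vsum_zero; ring.
    apply vsum_ext; intros; symmetry; apply H; lia.
  - rewrite IHn; [| lia | intros; apply H; lia]. rewrite (H (S n)) by lia. ring. Qed.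
Lemma vsum_nonneg k f : (forall i, (1 <= i <= k)%nat -> 0 <= f i) -> 0 <= vsum k f.
Proof. induction k; simpl; intros H; [lra|]. assert (0 <= vsum k f) by (apply IHk; intros; apply H; lia). assert (0 <= f (S k)) by (apply H; lia). lra. Qed.
Lemma vsum_pos k f j : (forall i, (1 <= i <= k)%nat -> 0 <= f i) -> (1 <= j <= k)%nat -> 0 < f j -> 0 < vsum k f.
Proof. induction k; simpl; intros H Hj Hp; [lia|].
  assert (0 <= vsum k f) by (apply vsum_nonneg; intros; apply H; lia).
  destruct (Nat.eq_dec j (S k)) as [->|]. - lra.
  - assert (0 < vsum k f) by (apply IHk; [intros; apply H; lia|lia|auto]). assert (0 <= f (S k)) by (apply H; lia). lra. Qed.
Lemma vsum_S k g : vsum (S k) g = g 1%nat + vsum k (fun i => g (S i)).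
Proof. induction k. - simpl; ring. - change (vsum (S (S k)) g) with (vsum (S k) g + g (S (S k))). rewrite IHk. simpl. ring. Qed.
Lemma vsum_shift n g : (1 <= n)%nat -> vsum n (fun i => g (nextn n i)) = vsum n g.
Proof. intros Hn. destruct n as [|k]; [lia|]. rewrite (vsum_S k g).
  change (vsum (S k) (fun i => g (nextn (S k) i))) with (vsum k (fun i => g (nextn (S k) i)) + g (nextn (S k) (S k))).
  replace (nextn (S k) (S k)) with 1%nat by (unfold nextn; rewrite Nat.eqb_refl; reflexivity).
  rewrite (vsum_ext k (fun i => g (nextn (S k) i)) (fun i => g (S i))). ring.
  intros i Hi. unfold nextn. replace (Nat.eqb i (S k)) with false by (symmetry; apply Nat.eqb_neq; lia). f_equal; lia. Qed.
Lemma prev_next n i : (1 <= i <= n)%nat -> prevn n (nextn n i) = i.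
Proof. intros H. unfold nextn, prevn. destruct (Nat.eqb_spec i n).
  - simpl. subst; reflexivity.
  - destruct (Nat.eqb_spec (i+1) 1); lia. Qed.
Lemma next_prev n i : (1 <= i <= n)%nat -> nextn n (prevn n i) = i.
Proof. intros H. unfold nextn, prevn. destruct (Nat.eqb_spec i 1).
  - rewrite Nat.eqb_refl. lia.
  - destruct (Nat.eqb_spec (i-1) n); lia. Qed.

Lemma Aop_ext n s x y i : (forall j, x j = y j) -> Aop n s x i = Aop n s y i.
Proof. intros H; unfold Aop, Lap; rewrite !H; reflexivity. Qed.
Lemma Aop_scal n s x c i : Aop n s (fun l => c * x l) i = c * Aop n s x i.
Proof. unfold Aop, Lap; ring. Qed.
Lemma Bop_scal n x c i : Bop n (fun l => c * x l) i = c * Bop n x i.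
Proof. unfold Bop; destruct (Nat.eqb i n); ring. Qed.

Lemma A_sym n s p q : (1 <= n)%nat ->
  vsum n (fun i => Aop n s p i * q i) = vsum n (fun i => p i * Aop n s q i).
Proof. intros Hn.
  assert (E1 : vsum n (fun i => p (prevn n i) * q i) = vsum n (fun i => p i * q (nextn n i))).
  { rewrite <- (vsum_shift n (fun i => p (prevn n i) * q i)) by auto. apply vsum_ext; intros; rewrite prev_next; auto. }
  assert (E2 : vsum n (fun i => p (nextn n i) * q i) = vsum n (fun i => p i * q (prevn n i))).
  { rewrite <- (vsum_shift n (fun i => p i * q (prevn n i))) by auto. apply vsum_ext; intros; rewrite prev_next; auto. }
  transitivity (vsum n (fun i => p i * q i) + (-s) * (vsum n (fun i => p (prevn n i) * q i) + vsum n (fun i => p (nextn n i) * q i)) + (2*s) * vsum n (fun i => p i * q i)).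
  { rewrite <- vsum_plus, <- !vsum_scal, <- !vsum_plus. apply vsum_ext; intros; unfold Aop, Lap; ring. }
  rewrite E1, E2.
  rewrite <- vsum_plus, <- !vsum_scal, <- !vsum_plus. apply vsum_ext; intros; unfold Aop, Lap; ring. Qed.

Lemma A_pos n s p : (1 <= n)%nat -> 0 <= s -> (exists i, (1 <= i <= n)%nat /\ p i <> 0) ->
  0 < vsum n (fun i => Aop n s p i * p i).
Proof. intros Hn Hs [j [Hj Hp]].
  assert (E1 : vsum n (fun i => p (prevn n i) * p i) = vsum n (fun i => p i * p (nextn n i))).
  { rewrite <- (vsum_shift n (fun i => p (prevn n i) * p i)) by auto. apply vsum_ext; intros; rewrite prev_next; auto. }
  assert (E2 : vsum n (fun i => p (nextn n i) * p (nextn n i)) = vsum n (fun i => p i * p i)).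
  { apply (vsum_shift n (fun i => p i * p i)); auto. }
  assert (F : vsum n (fun i => (p i - p (nextn n i)) ^ 2) = 2 * vsum n (fun i => p i * p i) + (-2) * vsum n (fun i => p i * p (nextn n i))).
  { transitivity (vsum n (fun i => p i * p i) + vsum n (fun i => p (nextn n i) * p (nextn n i)) + (-2) * vsum n (fun i => p i * p (nextn n i))).
    { rewrite <- vsum_plus, <- vsum_scal, <- vsum_plus. apply vsum_ext; intros; ring. }
    rewrite E2; ring. }
  assert (E : vsum n (fun i => Aop n s p i * p i) = vsum n (fun i => p i * p i) + s * vsum n (fun i => (p i - p (nextn n i)) ^ 2)).
  { transitivity (vsum n (fun i => p i * p i) + (-s) * (vsum n (fun i => p (prevn n i) * p i) + vsum n (fun i => p i * p (nextn n i))) + (2*s) * vsum n (fun i => p i * p i)).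
    { rewrite <- vsum_plus, <- !vsum_scal, <- !vsum_plus. apply vsum_ext; intros; unfold Aop, Lap; ring. }
    rewrite E1, F. ring. }
  rewrite E.
  assert (0 < vsum n (fun i => p i * p i)).
  { apply (vsum_pos n _ j); auto. intros; nra. assert (0 < p j * p j) by (apply Rsqr_pos_lt in Hp; unfold Rsqr in Hp; auto). auto. }
  assert (0 <= vsum n (fun i => (p i - p (nextn n i)) ^ 2)) by (apply vsum_nonneg; intros; apply pow2_ge_0).
  nra. Qed.

Lemma eig_lin n s lam p i : Aop n s (fun l => lam * p l) i = lam * Aop n s p i.
Proof. apply Aop_scal. Qed.

Lemma eig_orth n s lam mu p q : (1 <= n)%nat -> is_eigvec_AinvB n s lam p -> is_eigvec_AinvB n s mu q -> lam <> mu ->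
  vsum n (fun i => Aop n s p i * q i) = 0.
Proof. intros Hn [_ Hp] [_ Hq] Hne.
  assert (E : lam * vsum n (fun i => Aop n s p i * q i) = mu * vsum n (fun i => Aop n s p i * q i)).
  { transitivity (vsum n (fun i => p i * Bop n q i)).
    { rewrite <- vsum_scal. apply vsum_ext; intros i Hi.
      replace (lam * (Aop n s p i * q i)) with (Aop n s (fun l => lam * p l) i * q i) by (rewrite eig_lin; ring).
      rewrite Hp by auto. unfold Bop; destruct (Nat.eqb i n); ring. }
    transitivity (mu * vsum n (fun i => p i * Aop n s q i)).
    { rewrite <- vsum_scal. apply vsum_ext; intros i Hi. rewrite <- (Hq i Hi), eig_lin. ring. }
    rewrite A_sym by auto. reflexivity. }
  apply Rmult_eq_reg_l with (lam - mu). rewrite Rmult_0_r. lra. lra. Qed.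

Lemma lin_indep_eig n s (P : nat -> nat -> R) (lam : nat -> R) : (1 <= n)%nat -> 0 <= s ->
  (forall k, (1 <= k <= n)%nat -> is_eigvec_AinvB n s (lam k) (P k)) ->
  (forall j k, (1 <= j <= n)%nat -> (1 <= k <= n)%nat -> j <> k -> lam j <> lam k) ->
  lin_indep n P.
Proof. intros Hn Hs Heig Hd c Hc j Hj.
  set (G k := vsum n (fun i => Aop n s (P j) i * P k i)).
  assert (Hpos : 0 < G j). { apply A_pos; auto. apply (Heig j Hj). }
  assert (E : 0 = c j * G j).
  { transitivity (vsum n (fun i => Aop n s (P j) i * vsum n (fun k => c k * P k i))).
    { rewrite <- (vsum_zero n). apply vsum_ext; intros i Hi. rewrite Hc by auto. ring. }
    rewrite (vsum_ext n _ (fun i => vsum n (fun k => c k * (Aop n s (P j) i * P k i)))).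
    2:{ intros i Hi. rewrite <- vsum_scal. apply vsum_ext; intros; ring. }
    rewrite vsum_swap.
    rewrite (vsum_ext n _ (fun k => c k * G k)) by (intros; unfold G; rewrite <- vsum_scal; reflexivity).
    apply (vsum_single n (fun k => c k * G k) j); auto. intros k Hk Hne. unfold G. rewrite (eig_orth n s (lam j) (lam k)); auto. ring. }
  apply Rmult_eq_reg_r with (G j); lra. Qed.

Definition th (n m : nat) : R := 2 * PI * INR m / INR n.
Definition alpha (n : nat) (s : R) (m : nat) : R := 1 + 2 * s * (1 - cos (th n m)).
Definition Cv (n m l : nat) : R := cos (INR l * th n m).
Definition Sv (n m l : nat) : R := sin (INR l * th n m).

Lemma INR_n_pos n : (1 <= n)%nat -> 0 < INR n.
Proof. intros; apply lt_0_INR; lia. Qed.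

Lemma th_n n m : (1 <= n)%nat -> INR n * th n m = 0 + 2 * INR m * PI.
Proof. intros H. unfold th. assert (INR n <> 0) by (apply not_0_INR; lia). field; auto. Qed.

Lemma prev_val n m l (f : R -> R) : (2 <= n)%nat -> (1 <= l <= n)%nat ->
  (forall x k, f (x + 2 * INR k * PI) = f x) ->
  f (INR (prevn n l) * th n m) = f (INR l * th n m - th n m).
Proof. intros Hn Hl Hp. unfold prevn. destruct (Nat.eqb_spec l 1).
  - subst. rewrite th_n by lia. rewrite Hp. f_equal. simpl; ring.
  - rewrite minus_INR by lia. f_equal. simpl; ring. Qed.
Lemma next_val n m l (f : R -> R) : (2 <= n)%nat -> (1 <= l <= n)%nat ->
  (forall x k, f (x + 2 * INR k * PI) = f x) ->
  f (INR (nextn n l) * th n m) = f (INR l * th n m + th n m).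
Proof. intros Hn Hl Hp. unfold nextn. destruct (Nat.eqb_spec l n).
  - subst. replace (INR n * th n m + th n m) with (th n m + (INR n * th n m)) by ring.
    rewrite th_n by lia. rewrite Rplus_0_l, Hp. f_equal. simpl; ring.
  - rewrite plus_INR. f_equal. simpl; ring. Qed.

Lemma A_Cv n s m l : (2 <= n)%nat -> (1 <= l <= n)%nat -> Aop n s (Cv n m) l = alpha n s m * Cv n m l.
Proof. intros Hn Hl. unfold Aop, Lap, Cv, alpha.
  rewrite (prev_val n m l cos), (next_val n m l cos) by (auto; intros; apply cos_period).
  rewrite cos_minus, cos_plus. ring. Qed.
Lemma A_Sv n s m l : (2 <= n)%nat -> (1 <= l <= n)%nat -> Aop n s (Sv n m) l = alpha n s m * Sv n m l.
Proof. intros Hn Hl. unfold Aop, Lap, Sv, alpha.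
  rewrite (prev_val n m l sin), (next_val n m l sin) by (auto; intros; apply sin_period).
  rewrite sin_minus, sin_plus. ring. Qed.

Lemma tele N x : 2 * sin (x/2) * ssum N (fun m => cos (INR m * x)) = sin ((INR N - /2) * x) + sin (x/2).
Proof. induction N; simpl ssum.
  - replace ((INR 0 - /2) * x) with (- (x/2)) by (simpl; field). rewrite sin_neg. ring.
  - rewrite Rmult_plus_distr_l, IHN, S_INR.
    replace ((INR N - /2) * x) with (INR N * x - x/2) by field.
    replace ((INR N + 1 - /2) * x) with (INR N * x + x/2) by field.
    rewrite sin_minus, sin_plus. ring. Qed.

Lemma delta n l : (2 <= n)%nat -> (1 <= l <= n)%nat ->
  ssum n (fun m => Cv n m l) = if Nat.eqb l n then INR n else 0.
Proof. intros Hn Hl. assert (Hn0 : 0 < INR n) by (apply lt_0_INR; lia).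
  destruct (Nat.eqb_spec l n).
  - subst. rewrite (ssum_ext n _ (fun _ => 1)). rewrite ssum_const; ring.
    intros m _. unfold Cv. rewrite th_n by lia. rewrite cos_period. apply cos_0.
  - set (x := 2 * PI * INR l / INR n).
    rewrite (ssum_ext n _ (fun m => cos (INR m * x))).
    2:{ intros m _. unfold Cv, th, x. f_equal. field. lra. }
    assert (Hlt : INR l < INR n) by (apply lt_INR; lia).
    assert (Hl0 : 0 < INR l) by (apply lt_0_INR; lia).
    assert (Hs : 0 < sin (x/2)).
    { apply sin_gt_0; unfold x.
      - assert (0 < PI * INR l / INR n) by (apply Rdiv_lt_0_compat; [apply Rmult_lt_0_compat; [apply PI_RGT_0|]|]; lra).
        replace (2 * PI * INR l / INR n / 2) with (PI * INR l / INR n) by (field; lra). lra.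
      - replace (2 * PI * INR l / INR n / 2) with (PI * (INR l / INR n)) by (field; lra).
        assert (INR l / INR n < 1) by (apply (Rmult_lt_reg_r (INR n)); [lra|]; field_simplify; lra).
        assert (0 < PI) by apply PI_RGT_0. nra. }
    assert (T := tele n x).
    replace ((INR n - /2) * x) with (- (x/2) + 2 * INR l * PI) in T by (unfold x; field; lra).
    rewrite sin_period, sin_neg in T.
    apply (Rmult_eq_reg_l (2 * sin (x/2))); [lra|]. lra. Qed.

Lemma cos_th_sym n m : (1 <= n)%nat -> (m <= n)%nat -> cos (th n (n - m)) = cos (th n m).
Proof. intros Hn Hm. assert (0 < INR n) by (apply lt_0_INR; lia). unfold th. rewrite minus_INR by auto.
  replace (2 * PI * (INR n - INR m) / INR n) with (- (2 * PI * INR m / INR n) + 2 * INR 1 * PI) by (simpl; field; lra).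
  rewrite cos_period, cos_neg. reflexivity. Qed.
Lemma alpha_sym n s m : (1 <= n)%nat -> (m <= n)%nat -> alpha n s (n - m) = alpha n s m.
Proof. intros. unfold alpha. rewrite cos_th_sym; auto. Qed.
Lemma alpha_ge1 n s m : 0 < s -> 1 <= alpha n s m.
Proof. intros. unfold alpha. assert (cos (th n m) <= 1) by apply COS_bound. nra. Qed.
Lemma alpha_lt n s j j' : (1 <= n)%nat -> 0 < s -> (j < j')%nat -> (2 * j' <= n)%nat -> alpha n s j < alpha n s j'.
Proof. intros Hn Hs Hj Hj'. assert (0 < INR n) by (apply lt_0_INR; lia). unfold alpha.
  assert (cos (th n j') < cos (th n j)).
  { assert (PI0 : 0 < PI) by apply PI_RGT_0. unfold th.
    assert (INR j < INR j') by (apply lt_INR; auto). assert (0 <= INR j) by apply pos_INR.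
    assert (2 * INR j' <= INR n) by (replace 2 with (INR 2) by reflexivity; rewrite <- mult_INR; apply le_INR; auto).
    apply cos_decreasing_1.
    - apply Rmult_le_pos; [nra| left; apply Rinv_0_lt_compat; lra].
    - apply (Rmult_le_reg_r (INR n)); [lra|]. field_simplify; [|lra]. nra.
    - apply Rmult_le_pos; [nra| left; apply Rinv_0_lt_compat; lra].
    - apply (Rmult_le_reg_r (INR n)); [lra|]. field_simplify; [|lra]. nra.
    - apply (Rmult_lt_reg_r (INR n)); [lra|]. field_simplify; [|lra|lra]. nra. }
  nra. Qed.

Definition Jm (n m : nat) : nat := if Nat.leb m (Nat.div n 2) then m else (n - m)%nat.
Definition fsec n s mu := 1 + 2 / INR n * ssum n (fun m => 1 / (mu * alpha n s m - 1)).
Definition qq n s mu := sprod (S (Nat.div n 2)) (fun j => mu * alpha n s j - 1).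
Definition rr n s m mu := sprod (S (Nat.div n 2)) (fun j => if Nat.eqb j (Jm n m) then 1 else mu * alpha n s j - 1).
Definition gg n s mu := qq n s mu + 2 / INR n * ssum n (fun m => rr n s m mu).
Definition Vv n s mu l := ssum n (fun m => Cv n m l / (mu * alpha n s m - 1)).

Lemma div2_bounds n : (2 * Nat.div n 2 <= n /\ n <= 2 * Nat.div n 2 + 1)%nat.
Proof. pose proof (Nat.div_mod n 2 ltac:(lia)). pose proof (Nat.mod_upper_bound n 2 ltac:(lia)). lia. Qed.

Lemma Jm_le n m : (m < n)%nat -> (Jm n m <= Nat.div n 2)%nat.
Proof. intros H. pose proof (div2_bounds n). unfold Jm. destruct (Nat.leb_spec m (Nat.div n 2)); lia. Qed.
Lemma alphaJ n s m : (m < n)%nat -> alpha n s (Jm n m) = alpha n s m.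
Proof. intros H. unfold Jm. destruct (Nat.leb m (Nat.div n 2)); [reflexivity|]. apply alpha_sym; lia. Qed.
Lemma Jm_id n k : (k <= Nat.div n 2)%nat -> Jm n k = k.
Proof. intros H. unfold Jm. apply Nat.leb_le in H. rewrite H. reflexivity. Qed.

Lemma nz_all n s mu : (forall j, (j <= Nat.div n 2)%nat -> mu * alpha n s j - 1 <> 0) ->
  forall m, (m < n)%nat -> mu * alpha n s m - 1 <> 0.
Proof. intros H m Hm. rewrite <- alphaJ by auto. apply H, Jm_le; auto. Qed.

Lemma g_eq n s mu : (1 <= n)%nat -> (forall j, (j <= Nat.div n 2)%nat -> mu * alpha n s j - 1 <> 0) ->
  gg n s mu = qq n s mu * fsec n s mu.
Proof. intros Hn H. unfold gg, fsec. rewrite Rmult_plus_distr_l, Rmult_1_r. f_equal.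
  rewrite <- !ssum_scal. apply ssum_ext; intros m Hm.
  assert (Hnz := nz_all n s mu H m Hm).
  unfold rr, qq. rewrite <- (sprod_skip (S (Nat.div n 2)) (Jm n m) (fun j => mu * alpha n s j - 1)) by (pose proof (Jm_le n m Hm); lia).
  rewrite alphaJ by auto. field. split; [auto| apply not_0_INR; lia]. Qed.

Lemma cont_g n s : continuity (gg n s).
Proof. unfold gg, qq, rr.
  apply (continuity_plus (fun mu => sprod _ (fun j => mu * alpha n s j - 1))
     (fun mu => 2 / INR n * ssum n (fun m => sprod _ (fun j => if Nat.eqb j (Jm n m) then 1 else mu * alpha n s j - 1)))).
  - apply (cont_sprod _ (fun j mu => mu * alpha n s j - 1)). intros j. apply (cont_lin (alpha n s j) (-1)).
  - apply (continuity_scal (fun mu => ssum n (fun m => sprod _ (fun j => if Nat.eqb j (Jm n m) then 1 else mu * alpha n s j - 1)))).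
    apply (cont_ssum n (fun m mu => sprod _ (fun j => if Nat.eqb j (Jm n m) then 1 else mu * alpha n s j - 1))).
    intros m. apply (cont_sprod _ (fun j mu => if Nat.eqb j (Jm n m) then 1 else mu * alpha n s j - 1)).
    intros j. destruct (Nat.eqb j (Jm n m)).
    + apply continuity_const; intros ? ?; reflexivity.
    + apply (cont_lin (alpha n s j) (-1)). Qed.

Lemma g_pole n s k : (2 <= n)%nat -> 0 < s -> (k <= Nat.div n 2)%nat ->
  0 < (-1) ^ k * gg n s (1 / alpha n s k).
Proof. intros Hn Hs Hk. pose proof (div2_bounds n).
  assert (Ha : forall j, 1 <= alpha n s j) by (intros; apply alpha_ge1; auto).
  assert (Hak := Ha k).
  unfold gg, qq. rewrite (sprod_zero _ k) by (auto; try lia; field; lra).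
  rewrite Rplus_0_l.
  assert (Hsign : 0 < (-1) ^ k * rr n s k (1 / alpha n s k)).
  { unfold rr. rewrite Jm_id by auto. replace k with (Nat.min (S (Nat.div n 2)) k) at 1 by lia.
    apply sprod_sign.
    - intros j Hj Hjk. assert (alpha n s j < alpha n s k) by (apply alpha_lt; try lia; auto).
      apply (Rmult_lt_reg_r (alpha n s k)); [lra|]. field_simplify; lra.
    - intros j Hj Hjk. assert (alpha n s k < alpha n s j) by (apply alpha_lt; try lia; auto).
      apply (Rmult_lt_reg_r (alpha n s k)); [lra|]. field_simplify; lra. }
  replace ((-1) ^ k * (2 / INR n * ssum n (fun m => rr n s m (1 / alpha n s k))))
    with (2 / INR n * ssum n (fun m => (-1) ^ k * rr n s m (1 / alpha n s k))) by (rewrite ssum_scal; ring).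
  assert (0 < INR n) by (apply lt_0_INR; lia).
  apply Rmult_lt_0_compat; [apply Rdiv_lt_0_compat; lra|].
  apply (ssum_pos n _ k); [|lia|auto].
  intros m Hm. destruct (Nat.eq_dec (Jm n m) k) as [E|E].
  - unfold rr. rewrite E. unfold rr in Hsign. rewrite Jm_id in Hsign by auto. lra.
  - unfold rr. rewrite (sprod_zero _ k); [lra|lia|].
    replace (Nat.eqb k (Jm n m)) with false by (symmetry; apply Nat.eqb_neq; auto). field. lra. Qed.

Lemma Aop_ssum n s K (c : nat -> R) (F : nat -> nat -> R) i :
  Aop n s (fun l => ssum K (fun m => c m * F m l)) i = ssum K (fun m => c m * Aop n s (F m) i).
Proof. induction K; unfold Aop, Lap in *; simpl. - ring. - rewrite <- IHK. ring. Qed.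

Lemma Cv_n n m : (1 <= n)%nat -> Cv n m n = 1.
Proof. intros. unfold Cv. rewrite th_n by auto. rewrite cos_period. apply cos_0. Qed.

Lemma eigen_sym n s mu : (2 <= n)%nat -> fsec n s mu = 0 -> (forall m, (m < n)%nat -> mu * alpha n s m - 1 <> 0) ->
  is_eigvec_AinvB n s mu (Vv n s mu) /\ Vv n s mu n = - INR n / 2 /\ sym_vec n (Vv n s mu).
Proof. intros Hn Hf Hnz. assert (Hn0 : 0 < INR n) by (apply lt_0_INR; lia).
  assert (HVn : Vv n s mu n = - INR n / 2).
  { unfold fsec in Hf. unfold Vv. rewrite (ssum_ext n _ (fun m => 1 / (mu * alpha n s m - 1))).
    2:{ intros m Hm. rewrite Cv_n by lia. reflexivity. }
    apply (Rmult_eq_reg_l (2 / INR n)). 2:{ apply Rgt_not_eq, Rdiv_lt_0_compat; lra. }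
    replace (2 / INR n * (- INR n / 2)) with (-1) by (field; lra). lra. }
  split; [split|split; auto].
  - exists n. split; [lia|]. rewrite HVn. lra.
  - intros l Hl.
    rewrite (Aop_ext n s _ (fun l => ssum n (fun m => (mu / (mu * alpha n s m - 1)) * Cv n m l))).
    2:{ intros j. unfold Vv. rewrite <- ssum_scal. apply ssum_ext; intros. unfold Rdiv; ring. }
    rewrite Aop_ssum.
    rewrite (ssum_ext n _ (fun m => 1 * Cv n m l + 1 * (Cv n m l / (mu * alpha n s m - 1)))).
    2:{ intros m Hm. rewrite A_Cv by auto. field. auto. }
    rewrite ssum_lin, delta by auto. fold (Vv n s mu l).
    unfold Bop. destruct (Nat.eqb_spec l n).
    + subst. rewrite HVn. field; lra.
    + ring.
  - intros l Hl. unfold Vv. apply ssum_ext. intros m Hm. unfold Cv. f_equal. symmetry.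
    rewrite minus_INR by lia.
    replace ((INR n - INR l) * th n m) with (- (INR l * th n m) + INR n * th n m) by ring.
    rewrite th_n by lia. rewrite Rplus_0_l, cos_period, cos_neg. reflexivity. Qed.

Lemma between_nz n s k mu : (2 <= n)%nat -> 0 < s -> (1 <= k <= Nat.div n 2)%nat ->
  1 / alpha n s k < mu < 1 / alpha n s (k - 1) ->
  forall j, (j <= Nat.div n 2)%nat -> mu * alpha n s j - 1 <> 0.
Proof. intros Hn Hs Hk [H1 H2] j Hj. pose proof (div2_bounds n).
  assert (Ha : forall j, 1 <= alpha n s j) by (intros; apply alpha_ge1; auto).
  assert (Hj' := Ha j). assert (Hk' := Ha k). assert (Hk1 := Ha (k-1)%nat).
  destruct (Nat.lt_ge_cases j k).
  - assert (alpha n s j <= alpha n s (k-1)).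
    { destruct (Nat.eq_dec j (k-1)) as [->|]; [lra|]. left; apply alpha_lt; try lia; auto. }
    assert (mu * alpha n s (k-1) < 1).
    { apply (Rmult_lt_compat_r (alpha n s (k-1))) in H2; [|lra]. field_simplify in H2; lra. }
    assert (mu * alpha n s j <= mu * alpha n s (k - 1)).
    { apply Rmult_le_compat_l; auto. assert (0 < 1 / alpha n s k) by (apply Rdiv_lt_0_compat; lra). lra. }
    lra.
  - assert (alpha n s k <= alpha n s j).
    { destruct (Nat.eq_dec j k) as [->|]; [lra|]. left; apply alpha_lt; try lia; auto. }
    assert (1 < mu * alpha n s k).
    { apply (Rmult_lt_compat_r (alpha n s k)) in H1; [|lra]. field_simplify in H1; lra. }
    assert (mu * alpha n s k <= mu * alpha n s j).
    { apply Rmult_le_compat_l; auto. assert (0 < 1 / alpha n s k) by (apply Rdiv_lt_0_compat; lra). lra. }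
    lra. Qed.

Lemma root_pos n s k : (2 <= n)%nat -> 0 < s -> (1 <= k <= Nat.div n 2)%nat ->
  { mu | 1 / alpha n s k < mu < 1 / alpha n s (k - 1) /\ fsec n s mu = 0 }.
Proof. intros Hn Hs Hk. pose proof (div2_bounds n).
  assert (Ha : forall j, 1 <= alpha n s j) by (intros; apply alpha_ge1; auto).
  assert (Hab : 1 / alpha n s k < 1 / alpha n s (k - 1)).
  { assert (alpha n s (k-1) < alpha n s k) by (apply alpha_lt; try lia; auto).
    assert (Hk' := Ha k). assert (Hk1 := Ha (k-1)%nat).
    apply (Rmult_lt_reg_r (alpha n s k * alpha n s (k-1))); [nra|]. field_simplify; lra. }
  set (sg := (-1) ^ (k - 1)).
  assert (Hsg : sg * sg = 1). { unfold sg. rewrite <- pow_add. replace (k - 1 + (k - 1))%nat with (2 * (k-1))%nat by lia. rewrite pow_1_even. reflexivity. }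
  assert (Ha' : 0 < (-1) ^ k * gg n s (1 / alpha n s k)) by (apply g_pole; auto; lia).
  assert (Hb' : 0 < (-1) ^ (k-1) * gg n s (1 / alpha n s (k-1))) by (apply g_pole; auto; lia).
  replace ((-1) ^ k) with (- sg) in Ha' by (unfold sg; replace k with (S (k-1)) at 2 by lia; simpl; ring).
  fold sg in Hb'.
  destruct (IVT (fun x => sg * gg n s x) (1 / alpha n s k) (1 / alpha n s (k - 1))) as [z [Hz Hgz]].
  - apply (continuity_scal (gg n s) sg), cont_g.
  - exact Hab.
  - simpl. lra.
  - simpl. lra.
  - assert (Hg0 : gg n s z = 0) by (apply (Rmult_eq_reg_l sg); [simpl in Hgz; lra| intros E; rewrite E in Hsg; lra]).
    assert (Hz1 : z <> 1 / alpha n s k) by (intros ->; lra).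
    assert (Hz2 : z <> 1 / alpha n s (k-1)) by (intros ->; lra).
    assert (Hzb : 1 / alpha n s k < z < 1 / alpha n s (k - 1)) by lra.
    exists z. split; auto.
    assert (Hnz := between_nz n s k z Hn Hs Hk Hzb).
    rewrite g_eq in Hg0 by (auto; lia).
    assert (qq n s z <> 0) by (apply sprod_nz; intros; apply Hnz; lia).
    apply Rmult_integral in Hg0. destruct Hg0; [contradiction|auto]. Qed.

Lemma root_neg n s : (2 <= n)%nat -> 0 < s -> { mu | mu < 0 /\ fsec n s mu = 0 }.
Proof. intros Hn Hs. assert (Hn0 : 0 < INR n) by (apply lt_0_INR; lia).
  assert (Ha : forall j, 1 <= alpha n s j) by (intros; apply alpha_ge1; auto).
  assert (Hneg : forall x, x <= 0 -> forall j, x * alpha n s j - 1 < 0).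
  { intros x Hx j. assert (H1 := Ha j). nra. }
  assert (Hf0 : fsec n s 0 = -1).
  { unfold fsec. rewrite (ssum_ext n _ (fun _ => -1)) by (intros; field). rewrite ssum_const. field. lra. }
  assert (Hf2 : 0 < fsec n s (-2)).
  { unfold fsec. assert (INR n * (-1/3) <= ssum n (fun m => 1 / (-2 * alpha n s m - 1))).
    { apply ssum_ge. intros m _. assert (H1 := Ha m).
      replace (1 / (-2 * alpha n s m - 1)) with (- / (2 * alpha n s m + 1)) by (field; lra).
      assert (/ (2 * alpha n s m + 1) <= / 3) by (apply Rinv_le_contravar; lra). lra. }
    assert (2 / INR n * (INR n * (-1/3)) <= 2 / INR n * ssum n (fun m => 1 / (-2 * alpha n s m - 1))).
    { apply Rmult_le_compat_l; auto. left; apply Rdiv_lt_0_compat; lra. }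
    replace (2 / INR n * (INR n * (-1/3))) with (-2/3) in H0 by (field; lra). lra. }
  assert (Hq : forall x, x <= 0 -> qq n s x <> 0) by (intros; apply sprod_nz; intros; apply Rlt_not_eq, Hneg; auto).
  assert (Hqq : 0 < qq n s (-2) * qq n s 0).
  { unfold qq. rewrite sprod_mult. apply sprod_pos. intros j _. assert (H1 := Hneg (-2) ltac:(lra) j). assert (H2 := Hneg 0 ltac:(lra) j). nra. }
  assert (Hgeq : forall x, x <= 0 -> gg n s x = qq n s x * fsec n s x)
    by (intros; apply g_eq; [lia|intros; apply Rlt_not_eq, Hneg; auto]).
  set (c := - qq n s 0).
  destruct (IVT (fun x => c * gg n s x) (-2) 0) as [z [Hz Hgz]].
  - apply (continuity_scal (gg n s) c), cont_g.
  - lra.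
  - simpl. unfold c. rewrite Hgeq by lra. nra.
  - simpl. unfold c. rewrite Hgeq by lra. rewrite Hf0. assert (qq n s 0 <> 0) by (apply Hq; lra).
    assert (0 < qq n s 0 * qq n s 0) by (apply Rsqr_pos_lt in H; unfold Rsqr in H; auto). nra.
  - assert (qq n s 0 <> 0) by (apply Hq; lra).
    assert (Hg0 : gg n s z = 0) by (apply (Rmult_eq_reg_l c); [|unfold c; lra]; simpl in Hgz; lra).
    assert (Hz0 : z <> 0). { intros ->. rewrite Hgeq, Hf0 in Hg0 by lra. lra. }
    exists z. split; [lra|]. rewrite Hgeq in Hg0 by lra.
    apply Rmult_integral in Hg0. destruct Hg0 as [H0|H0]; auto. exfalso; apply (Hq z); auto; lra. Qed.

Lemma eigen_sin n s m : (2 <= n)%nat -> 0 < s -> (1 <= m)%nat -> (2 * m < n)%nat ->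
  is_eigvec_AinvB n s (1 / alpha n s m) (Sv n m) /\ Sv n m n = 0 /\ antisym_vec n (Sv n m) /\ 0 < Sv n m 1.
Proof. intros Hn Hs Hm Hmn. assert (Hn0 : 0 < INR n) by (apply lt_0_INR; lia).
  assert (Ha := alpha_ge1 n s m Hs).
  assert (HSn : Sv n m n = 0). { unfold Sv. rewrite th_n by lia. rewrite sin_period. apply sin_0. }
  assert (HS1 : 0 < Sv n m 1).
  { unfold Sv. simpl INR. rewrite Rmult_1_l. unfold th. apply sin_gt_0.
    - assert (0 < INR m) by (apply lt_0_INR; lia). assert (0 < PI) by apply PI_RGT_0.
      apply Rdiv_lt_0_compat; [|lra]. nra.
    - assert (2 * INR m < INR n) by (replace 2 with (INR 2) by reflexivity; rewrite <- mult_INR; apply lt_INR; auto).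
      assert (0 < PI) by apply PI_RGT_0.
      apply (Rmult_lt_reg_r (INR n)); [lra|]. field_simplify; [|lra]. nra. }
  split; [split|split; [auto|split; auto]].
  - exists 1%nat. split; [lia|lra].
  - intros l Hl. rewrite Aop_scal, A_Sv by auto. unfold Bop. destruct (Nat.eqb_spec l n).
    + subst. rewrite HSn. ring.
    + field. lra.
  - intros l Hl. unfold Sv. rewrite minus_INR by lia.
    replace ((INR n - INR l) * th n m) with (- (INR l * th n m) + INR n * th n m) by ring.
    rewrite th_n by lia. rewrite Rplus_0_l, sin_period, sin_neg. ring. Qed.

Lemma pow2_gt_0 x : x <> 0 -> 0 < x ^ 2.
Proof. intros H. simpl. rewrite Rmult_1_r. apply (Rsqr_pos_lt x H). Qed.

Definition nrm (n : nat) (p : nat -> R) : nat -> R := fun l => p l / sqrt (vsum n (fun i => p i ^ 2)).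

Lemma nrm_pos n p : (exists i, (1 <= i <= n)%nat /\ p i <> 0) -> 0 < sqrt (vsum n (fun i => p i ^ 2)).
Proof. intros [i [Hi Hp]]. apply sqrt_lt_R0. apply (vsum_pos n _ i); auto.
  - intros; apply pow2_ge_0.
  - apply pow2_gt_0; auto. Qed.

Lemma nrm_props n s lam p : is_eigvec_AinvB n s lam p ->
  is_eigvec_AinvB n s lam (nrm n p) /\ unit_norm n (nrm n p).
Proof. intros [Hex He]. assert (Hr := nrm_pos n p Hex). set (r := sqrt (vsum n (fun i => p i ^ 2))) in *.
  split; [split|].
  - destruct Hex as [i [Hi Hp]]. exists i. split; auto. unfold nrm. fold r. intros E.
    apply Hp. apply (Rmult_eq_reg_r (/ r)). rewrite Rmult_0_l. exact E. apply Rgt_not_eq, Rinv_0_lt_compat; lra.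
  - intros i Hi. unfold nrm. fold r.
    rewrite (Aop_ext n s _ (fun l => / r * (lam * p l))) by (intros; unfold Rdiv; ring).
    rewrite Aop_scal, He by auto. unfold Bop. destruct (Nat.eqb i n); field; lra.
  - unfold unit_norm, nrm. fold r.
    rewrite (vsum_ext n _ (fun i => / (r * r) * p i ^ 2)) by (intros; field; lra).
    rewrite vsum_scal. unfold r. rewrite sqrt_sqrt. field.
    + apply Rgt_not_eq. fold r. destruct Hex as [i [Hi Hp]]. apply (vsum_pos n _ i); auto. intros; apply pow2_ge_0. apply pow2_gt_0; auto.
    + apply vsum_nonneg. intros; apply pow2_ge_0. Qed.

Lemma root_pos' n s k : { mu | (2 <= n)%nat -> 0 < s -> (1 <= k <= Nat.div n 2)%nat ->
  1 / alpha n s k < mu < 1 / alpha n s (k - 1) /\ fsec n s mu = 0 }.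
Proof. destruct (le_lt_dec 2 n) as [H1|H1]; [|exists 0; intros; lia].
  destruct (Rlt_dec 0 s) as [H2|H2]; [|exists 0; intros; lra].
  destruct (le_lt_dec 1 k) as [H3|H3]; [|exists 0; intros; lia].
  destruct (le_lt_dec k (Nat.div n 2)) as [H4|H4]; [|exists 0; intros; lia].
  destruct (root_pos n s k H1 H2 (conj H3 H4)) as [mu Hmu]. exists mu; intros; auto. Qed.

Lemma inv_alpha_le n s j k : (1 <= n)%nat -> 0 < s -> (j <= k)%nat -> (2 * k <= n)%nat -> 1 / alpha n s k <= 1 / alpha n s j.
Proof. intros. assert (Ha := alpha_ge1 n s j H0). assert (Hb := alpha_ge1 n s k H0).
  assert (alpha n s j <= alpha n s k) by (destruct (Nat.eq_dec j k) as [->|]; [lra|left; apply alpha_lt; auto; lia]).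
  apply (Rmult_le_reg_r (alpha n s j * alpha n s k)); [nra|]. field_simplify; lra. Qed.

Lemma cnt_le M d : cnt M (fun k => Nat.leb k d) = Nat.min M d.
Proof. induction M; cbn [cnt]; [reflexivity|]. rewrite IHM. destruct (Nat.leb_spec (S M) d); lia. Qed.
Lemma cnt_nle M d : cnt M (fun k => negb (Nat.leb k d)) = (M - Nat.min M d)%nat.
Proof. induction M; cbn [cnt]; [reflexivity|]. rewrite IHM. destruct (Nat.leb_spec (S M) d); cbn [negb]; lia. Qed.

Theorem lemma3p2 (n : nat) (sigma : R) (hn : (2 <= n)%nat) (hsigma : 0 < sigma) :
  exists (P : nat -> nat -> R) (lam : nat -> R) (s : nat -> bool),
    lin_indep n P /\
    (forall k, (1 <= k <= n)%nat ->
       is_eigvec_AinvB n sigma (lam k) (P k) /\ unit_norm n (P k)) /\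
    (forall k, (1 <= k <= n - 1)%nat -> 0 < lam k) /\
    lam n < 0 /\
    cnt (n - 1) s = Nat.div n 2 /\
    (forall k, (1 <= k <= n - 1)%nat -> s k = true ->
       sym_vec n (P k) /\ P k n <> 0) /\
    cnt (n - 1) (fun k => negb (s k)) = Nat.div (n - 1) 2 /\
    (forall k, (1 <= k <= n - 1)%nat -> s k = false ->
       (exists (m : Z) (b : R), b <> 0 /\
          forall l, (1 <= l <= n)%nat ->
            P k l = b * sin (INR l * (2 * PI * IZR m / INR n))) /\
       antisym_vec n (P k) /\ P k n = 0) /\
    sym_vec n (P n) /\ P n n <> 0.
Proof.
  pose proof (div2_bounds n) as Hd. pose proof (div2_bounds (n-1)) as Hd1.
  set (d := Nat.div n 2) in *.
  assert (Hn0 : 0 < INR n) by (apply lt_0_INR; lia).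
  destruct (root_neg n sigma hn hsigma) as [mu0 [Hmu0 Hf0]].
  set (mu := fun k => proj1_sig (root_pos' n sigma k)).
  assert (Hmu : forall k, (1 <= k <= d)%nat -> 1 / alpha n sigma k < mu k < 1 / alpha n sigma (k - 1) /\ fsec n sigma (mu k) = 0).
  { intros k Hk. unfold mu. destruct (root_pos' n sigma k) as [z Hz]. simpl. apply Hz; auto. }
  assert (Hapos : forall m, 0 < 1 / alpha n sigma m).
  { intros m. assert (H := alpha_ge1 n sigma m hsigma). apply Rdiv_lt_0_compat; lra. }
  assert (HA : forall k, (1 <= k <= d)%nat -> is_eigvec_AinvB n sigma (mu k) (Vv n sigma (mu k)) /\
             Vv n sigma (mu k) n = - INR n / 2 /\ sym_vec n (Vv n sigma (mu k))).
  { intros k Hk. destruct (Hmu k Hk) as [Hb Hf]. apply eigen_sym; auto.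
    apply nz_all. apply (between_nz n sigma k); auto. }
  assert (HC : is_eigvec_AinvB n sigma mu0 (Vv n sigma mu0) /\
             Vv n sigma mu0 n = - INR n / 2 /\ sym_vec n (Vv n sigma mu0)).
  { apply eigen_sym; auto. intros m Hm. assert (H := alpha_ge1 n sigma m hsigma). nra. }
  assert (HB : forall k, (d < k < n)%nat -> is_eigvec_AinvB n sigma (1 / alpha n sigma (k - d)) (Sv n (k - d)) /\
             Sv n (k - d) n = 0 /\ antisym_vec n (Sv n (k - d)) /\ 0 < Sv n (k - d) 1).
  { intros k Hk. apply eigen_sin; auto; lia. }
  set (P := fun k => if Nat.leb k d then nrm n (Vv n sigma (mu k))
                     else if Nat.ltb k n then nrm n (Sv n (k - d)) else nrm n (Vv n sigma mu0)).
  set (lam := fun k => if Nat.leb k d then mu k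
                     else if Nat.ltb k n then 1 / alpha n sigma (k - d) else mu0).
  assert (HE : forall k, (1 <= k <= n)%nat -> is_eigvec_AinvB n sigma (lam k) (P k) /\ unit_norm n (P k)).
  { intros k Hk. unfold P, lam. destruct (Nat.leb_spec k d).
    - apply nrm_props, HA; lia.
    - destruct (Nat.ltb_spec k n).
      + apply nrm_props, HB; lia.
      + apply nrm_props, HC. }
  assert (Tsym : forall p, sym_vec n p -> sym_vec n (nrm n p)).
  { intros p Hp l Hl. unfold nrm. rewrite <- Hp by auto. reflexivity. }
  assert (Tanti : forall p, antisym_vec n p -> antisym_vec n (nrm n p)).
  { intros p Hp l Hl. unfold nrm. rewrite Hp by auto. unfold Rdiv; ring. }
  assert (Tnz : forall p, p n <> 0 -> nrm n p n <> 0).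
  { intros p Hp. assert (Hr : 0 < sqrt (vsum n (fun i => p i ^ 2))) by (apply nrm_pos; exists n; split; [lia|auto]).
    unfold nrm. intros E. apply Hp. apply (Rmult_eq_reg_r (/ sqrt (vsum n (fun i => p i ^ 2)))).
    rewrite Rmult_0_l. exact E. apply Rgt_not_eq, Rinv_0_lt_compat; lra. }
  assert (Hvn : - INR n / 2 <> 0) by lra.
  assert (AA : forall j k, (1 <= j)%nat -> (j < k)%nat -> (k <= d)%nat -> mu k < mu j).
  { intros j k H1 H2 H3. destruct (Hmu k ltac:(lia)) as [[_ Hk] _]. destruct (Hmu j ltac:(lia)) as [[Hj _] _].
    assert (1 / alpha n sigma (k - 1) <= 1 / alpha n sigma j) by (apply inv_alpha_le; auto; lia). lra. }
  assert (AB : forall j m, (1 <= j <= d)%nat -> (1 <= m <= d)%nat -> mu j <> 1 / alpha n sigma m).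
  { intros j m Hj Hm. destruct (Hmu j Hj) as [[H1 H2] _].
    destruct (Nat.le_gt_cases j m).
    - assert (1 / alpha n sigma m <= 1 / alpha n sigma j) by (apply inv_alpha_le; auto; lia). lra.
    - assert (1 / alpha n sigma (j - 1) <= 1 / alpha n sigma m) by (apply inv_alpha_le; auto; lia). lra. }
  assert (BB : forall m m', (1 <= m)%nat -> (m < m')%nat -> (m' <= d)%nat -> 1 / alpha n sigma m <> 1 / alpha n sigma m').
  { intros m m' H1 H2 H3. assert (alpha n sigma m < alpha n sigma m') by (apply alpha_lt; auto; lia).
    assert (H4 := alpha_ge1 n sigma m hsigma). intros E.
    apply (Rmult_eq_compat_r (alpha n sigma m * alpha n sigma m')) in E. field_simplify in E; lra. }
  assert (Hpos : forall k, (1 <= k <= n - 1)%nat -> 0 < lam k).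
  { intros k Hk. unfold lam. destruct (Nat.leb_spec k d).
    - destruct (Hmu k ltac:(lia)) as [[H1 _] _]. specialize (Hapos k). lra.
    - destruct (Nat.ltb_spec k n); [apply Hapos|lia]. }
  assert (Hlamn : lam n = mu0).
  { unfold lam. destruct (Nat.leb_spec n d); [lia|]. destruct (Nat.ltb_spec n n); [lia|reflexivity]. }
  assert (Hdist : forall j k, (1 <= j <= n)%nat -> (1 <= k <= n)%nat -> j <> k -> lam j <> lam k).
  { assert (G : forall j k, (1 <= j)%nat -> (j < k)%nat -> (k <= n)%nat -> lam j <> lam k).
    { intros j k H1 H2 H3. destruct (Nat.eq_dec k n) as [->|Hkn].
      - rewrite Hlamn. assert (0 < lam j) by (apply Hpos; lia). lra.
      - unfold lam. destruct (Nat.leb_spec j d), (Nat.leb_spec k d).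
        + assert (mu k < mu j) by (apply AA; lia). lra.
        + destruct (Nat.ltb_spec k n); [|lia]. apply AB; lia.
        + lia.
        + destruct (Nat.ltb_spec j n); [|lia]. destruct (Nat.ltb_spec k n); [|lia]. apply BB; lia. }
    intros j k Hj Hk Hne. destruct (proj1 (Nat.lt_gt_cases j k) Hne) as [H|H]; [apply G; lia|].
    intros E. symmetry in E. revert E. apply G; lia. }
  exists P, lam, (fun k => Nat.leb k d).
  split; [apply (lin_indep_eig n sigma P lam); auto; [lia|lra|intros; apply HE; auto]|].
  split; [exact HE|].
  split; [exact Hpos|].
  split; [rewrite Hlamn; exact Hmu0|].
  split; [rewrite cnt_le; lia|].
  split.
  { intros k Hk Hs. unfold P. rewrite Hs. destruct (HA k ltac:(apply Nat.leb_le in Hs; lia)) as [_ [H1 H2]].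
    split; [apply Tsym; auto| apply Tnz; rewrite H1; auto]. }
  split; [rewrite cnt_nle; lia|].
  split.
  { intros k Hk Hs. unfold P. rewrite Hs. apply Nat.leb_gt in Hs.
    destruct (Nat.ltb_spec k n); [|lia].
    destruct (HB k ltac:(lia)) as [He [H1 [H2 H3]]].
    assert (Hr : 0 < sqrt (vsum n (fun i => Sv n (k - d) i ^ 2))) by (apply nrm_pos; exists 1%nat; split; [lia|lra]).
    split; [|split].
    - exists (Z.of_nat (k - d)), (/ sqrt (vsum n (fun i => Sv n (k - d) i ^ 2))). split.
      + apply Rgt_not_eq, Rinv_0_lt_compat; lra.
      + intros l Hl. unfold nrm, Sv, th. rewrite <- INR_IZR_INZ. unfold Rdiv at 1. ring.
    - apply Tanti; auto.
    - unfold nrm. rewrite H1. unfold Rdiv; ring. }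
  split.
  - unfold P. destruct (Nat.leb_spec n d); [lia|]. destruct (Nat.ltb_spec n n); [lia|]. apply Tsym, HC.
  - unfold P. destruct (Nat.leb_spec n d); [lia|]. destruct (Nat.ltb_spec n n); [lia|]. apply Tnz. rewrite (proj1 (proj2 HC)). auto.
Qed.
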